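(* Let $f,g\in\mathbb{N}^\mathbb{N}$. If $f$ is computably traceable and $g$ is computably traceable relative to $f$, then $g$ is computably traceable.
   Context: For a finite set $\{x_1<\dots<x_n\}\subseteq\mathbb{N}$, its canonical index is $\prod_{i=1}^n p_i^{x_i}$ with $p_i$ the $i$-th prime; $D_m$ denotes the finite set with canonical index $m$. For $h\in\mathbb{N}^\mathbb{N}$, a function $g\in\mathbb{N}^\mathbb{N}$ is computably traceable relative to $h$ if for every nondecreasing unbounded computable function $\varphi:\mathbb{N}\to\mathbb{N}_{\ge1}$ and every function $g'\le_T g$ there is an $h$-computable function $r$ such that for all $n$, $\|D_{r(n)}\|\le\varphi(n)$ and $g'(n)\in D_{r(n)}$ (here $\|\cdot\|$ is cardinality). $g$ is computably traceable if it is computably traceable relative to a computable $h$ (i.e. $r$ can be taken computable). *)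

(* Defs.v *)
From mathcomp Require Import all_boot.
Set Implicit Arguments. Unset Strict Implicit. Unset Printing Implicit Defensive.

Inductive code : Type :=
| cZero
| cSucc
| cProj of nat
| cOrc
| cComp of code & seq code
| cRec of code & code                (* primitive recursion on the first argument *)
| cMu of code.                       (* unbounded minimisation on the first argument *)

Inductive eval (h : nat -> nat) : code -> seq nat -> nat -> Prop :=
| eZero args : eval h cZero args 0
| eSucc args : eval h cSucc args (nth 0 args 0).+1
| eProj i args : eval h (cProj i) args (nth 0 args i)
| eOrc args : eval h cOrc args (h (nth 0 args 0))
| eComp f gs args ys y :
    evals h gs args ys -> eval h f ys y -> eval h (cComp f gs) args y
| eRec0 b s rest y : eval h b rest y -> eval h (cRec b s) (0 :: rest) y
| eRecS b s n rest z y :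
    eval h (cRec b s) (n :: rest) z -> eval h s (n :: z :: rest) y ->
    eval h (cRec b s) (n.+1 :: rest) y
| eMu f args y :
    eval h f (y :: args) 0 ->
    (forall z, z < y -> exists v, eval h f (z :: args) v.+1) ->
    eval h (cMu f) args y
with evals (h : nat -> nat) : seq code -> seq nat -> seq nat -> Prop :=
| esNil args : evals h [::] args [::]
| esCons g gs args y ys :
    eval h g args y -> evals h gs args ys -> evals h (g :: gs) args (y :: ys).

Definition comp_rel (h F : nat -> nat) : Prop :=
  exists c : code, forall n, eval h c [:: n] (F n).

Definition computable (F : nat -> nat) : Prop := comp_rel (fun _ => 0) F.

Definition turing_le (g' g : nat -> nat) : Prop := comp_rel g g'.

(* next prime strictly above p (Euclid: some prime lies in (p, p + p!]) *)
Definition next_prime (p : nat) : nat :=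
  head 0 [seq q <- iota p.+1 (p`!) | prime q].

(* nth_prime i = p_(i+1), i.e. nth_prime 0 = 2, nth_prime 1 = 3, ... *)
Fixpoint nth_prime (i : nat) : nat :=
  if i is i'.+1 then next_prime (nth_prime i') else 2.

(* canonical index of the finite set {x_1 < ... < x_n}, given as the strictly
   increasing list [:: x_1; ...; x_n] : prod_{i=1}^n p_i ^ x_i *)
Definition canon_index (s : seq nat) : nat :=
  \prod_(i < size s) nth_prime i ^ nth 0 s i.

(* s (strictly increasing list) is a finite set with canonical index m,
   i.e. s represents D_m *)
Definition is_D (m : nat) (s : seq nat) : Prop :=
  sorted ltn s /\ canon_index s = m.

Definition traceable_rel (h g : nat -> nat) : Prop :=
  forall phi : nat -> nat,
    computable phi ->
    (forall n, 1 <= phi n) ->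
    (forall m n, m <= n -> phi m <= phi n) ->
    (forall b, exists n, b < phi n) ->
    forall g' : nat -> nat, turing_le g' g ->
    exists r : nat -> nat, comp_rel h r /\
      forall n, exists s : seq nat,
        is_D (r n) s /\ size s <= phi n /\ g' n \in s.

Definition traceable (g : nat -> nat) : Prop :=
  exists h : nat -> nat, computable h /\ traceable_rel h g.

(* Main.v *)
Require Import Defs.
From mathcomp Require Import all_boot zify.
Set Implicit Arguments. Unset Strict Implicit. Unset Printing Implicit Defensive.

Inductive tm : Type :=
| tZ | tS of tm | tV of nat
| tRec of tm & tm & tm
| tSum of tm & tm | tProd of tm & tm
| tExt of code & (nat -> nat) & tm
| tApp1 of tm & tm | tApp2 of tm & tm & tm | tApp3 of tm & tm & tm & tm.

Fixpoint iterR (b : nat) (st : nat -> nat -> nat) (n : nat) : nat :=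
  if n is k.+1 then st k (iterR b st k) else b.

Fixpoint sem (t : tm) (e : seq nat) : nat :=
  match t with
  | tZ => 0 | tS a => (sem a e).+1 | tV i => nth 0 e i
  | tRec n b s => iterR (sem b e) (fun k z => sem s [:: k, z & e]) (sem n e)
  | tSum n b => \sum_(0 <= j < sem n e) sem b (j :: e)
  | tProd n b => \prod_(0 <= j < sem n e) sem b (j :: e)
  | tExt _ G a => G (sem a e)
  | tApp1 f a => sem f [:: sem a e]
  | tApp2 f a b => sem f [:: sem a e; sem b e]
  | tApp3 f a b c => sem f [:: sem a e; sem b e; sem c e]
  end.

Definition cadd : code := cRec (cProj 0) (cComp cSucc [:: cProj 1]).
Definition cmul : code := cRec cZero (cComp cadd [:: cProj 2; cProj 1]).
Definition idc (m K : nat) : seq code := map cProj (iota m K).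

Fixpoint compile (K : nat) (t : tm) : code :=
  match t with
  | tZ => cZero | tS a => cComp cSucc [:: compile K a] | tV i => cProj i
  | tRec n b s => cComp (cRec (compile K b) (compile K.+2 s)) (compile K n :: idc 0 K)
  | tSum n b => cComp (cRec cZero (cComp cadd
        [:: cComp (compile K.+1 b) (cProj 0 :: idc 2 K); cProj 1]))
        (compile K n :: idc 0 K)
  | tProd n b => cComp (cRec (cComp cSucc [:: cZero]) (cComp cmul
        [:: cProj 1; cComp (compile K.+1 b) (cProj 0 :: idc 2 K)]))
        (compile K n :: idc 0 K)
  | tExt c _ a => cComp c [:: compile K a]
  | tApp1 f a => cComp (compile 1 f) [:: compile K a]
  | tApp2 f a b => cComp (compile 2 f) [:: compile K a; compile K b]
  | tApp3 f a b c => cComp (compile 3 f) [:: compile K a; compile K b; compile K c]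
  end.

Section Comp.
Variable h : nat -> nat.

Fixpoint wf (K : nat) (t : tm) : Prop :=
  match t with
  | tZ => True | tS a => wf K a | tV i => i < K
  | tRec n b s => [/\ wf K n, wf K b & wf K.+2 s]
  | tSum n b => wf K n /\ wf K.+1 b
  | tProd n b => wf K n /\ wf K.+1 b
  | tExt c G a => (forall x, eval h c [:: x] (G x)) /\ wf K a
  | tApp1 f a => wf 1 f /\ wf K a
  | tApp2 f a b => [/\ wf 2 f, wf K a & wf K b]
  | tApp3 f a b c => [/\ wf 3 f, wf K a, wf K b & wf K c]
  end.

Lemma evals_proj (l : seq nat) e : evals h (map cProj l) e (map (nth 0 e) l).
Proof. elim: l => [|i l IH] /=; constructor => //; constructor. Qed.

Lemma map_nth_shift (x : nat) s m n :
  map (nth 0 (x :: s)) (iota m.+1 n) = map (nth 0 s) (iota m n).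
Proof. by elim: n m => [|n IH] m //=; rewrite IH. Qed.

Lemma idc0 e : evals h (idc 0 (size e)) e e.
Proof.
have E : map (nth 0 e) (iota 0 (size e)) = e := mkseq_nth 0 e.
by rewrite /idc; have := evals_proj (iota 0 (size e)) e; rewrite E.
Qed.

Lemma idc2 a b e : evals h (idc 2 (size e)) [:: a, b & e] e.
Proof.
have := evals_proj (iota 2 (size e)) [:: a, b & e].
have E : map (nth 0 e) (iota 0 (size e)) = e := mkseq_nth 0 e.
by rewrite map_nth_shift map_nth_shift E.
Qed.

Lemma eval_cadd n x rest : eval h cadd [:: n, x & rest] (x + n).
Proof.
elim: n => [|n IH]; first by rewrite addn0; apply: eRec0; constructor.
rewrite addnS; apply: (eRecS IH).
apply: eComp; first by constructor; [constructor | constructor].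
by constructor.
Qed.

Lemma eval_cmul n x rest : eval h cmul [:: n, x & rest] (n * x).
Proof.
elim: n => [|n IH]; first by apply: eRec0; constructor.
rewrite mulSn addnC; apply: (eRecS IH).
apply: eComp; last by apply: (eval_cadd _ _ [::]).
constructor; first by constructor.
constructor; first by constructor.
constructor.
Qed.

Lemma eval_rec cb cs (B : seq nat -> nat) (S : nat -> nat -> nat) e N :
  eval h cb e (B e) -> (forall k z, eval h cs [:: k, z & e] (S k z)) ->
  eval h (cRec cb cs) (N :: e) (iterR (B e) S N).
Proof.
move=> Hb Hs; elim: N => [|N IH] /=; first by constructor.
exact: eRecS IH (Hs _ _).
Qed.

Lemma iterR_sum (F : nat -> nat) N :
  iterR 0 (fun k z => z + F k) N = \sum_(0 <= j < N) F j.
Proof. elim: N => [|N IH] /=; first by rewrite big_geq. by rewrite big_nat_recr //= IH. Qed.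

Lemma iterR_prod (F : nat -> nat) N :
  iterR 1 (fun k z => z * F k) N = \prod_(0 <= j < N) F j.
Proof. elim: N => [|N IH] /=; first by rewrite big_geq. by rewrite big_nat_recr //= IH. Qed.

Lemma compile_ok t : forall K e, wf K t -> size e = K -> eval h (compile K t) e (sem t e).
Proof.
elim: t => [|a IHa|i|n IHn b IHb s IHs|n IHn b IHb|n IHn b IHb|c G a IHa
           |f IHf a IHa|f IHf a IHa b IHb|f IHf a IHa b IHb d IHd] K e /=.
- by move=> _ _; constructor.
- move=> w se; apply: eComp; first by constructor; [exact: IHa | constructor].
  by constructor.
- by move=> _ _; constructor.
- case=> wn wb ws se; apply: eComp.
    constructor; first exact: IHn. by rewrite -se; apply: idc0.
  apply: (eval_rec (B := sem b)); first exact: IHb.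
  by move=> k z; apply: IHs => //=; rewrite se.
- case=> wn wb se; apply: eComp.
    constructor; first exact: IHn. by rewrite -se; apply: idc0.
  rewrite -iterR_sum; apply: (eval_rec (B := fun _ => 0)); first by constructor.
  move=> k z; apply: eComp; last by apply: (eval_cadd _ _ [::]).
  constructor; last by constructor; [constructor | constructor].
  apply: eComp; last by apply: (IHb K.+1) => //=; rewrite se.
  constructor; first by constructor.
  by rewrite -se; apply: idc2.
- case=> wn wb se; apply: eComp.
    constructor; first exact: IHn. by rewrite -se; apply: idc0.
  rewrite -iterR_prod; apply: (eval_rec (B := fun _ => 1)).
    by apply: eComp; [constructor; [constructor | constructor] | constructor].
  move=> k z; apply: eComp; last by apply: (eval_cmul _ _ [::]).
  constructor; first by constructor.
  constructor; last by constructor.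
  apply: eComp; last by apply: (IHb K.+1) => //=; rewrite se.
  constructor; first by constructor.
  by rewrite -se; apply: idc2.
- case=> Hc w se; apply: eComp; last exact: Hc.
  by constructor; [exact: IHa | constructor].
- case=> wf1 wa se; apply: eComp; last by apply: IHf.
  by constructor; [exact: IHa | constructor].
- case=> wf1 wa wb se; apply: eComp; last by apply: IHf.
  by constructor; [exact: IHa | constructor; [exact: IHb | constructor]].
- case=> wf1 wa wb wd se; apply: eComp; last by apply: IHf.
  constructor; first exact: IHa.
  by constructor; [exact: IHb | constructor; [exact: IHd | constructor]].
Qed.

End Comp.

Definition tOne := tS tZ.
Definition addc := tRec (tV 1) (tV 0) (tS (tV 1)).
Definition tAdd a b := tApp2 addc a b.
Lemma iterS x y : iterR x (fun _ => succn) y = x + y.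
Proof. elim: y => [|n IH] /=; by rewrite ?addn0 ?addnS ?IH. Qed.
Lemma semAdd a b e : sem (tAdd a b) e = sem a e + sem b e.
Proof. by rewrite /tAdd /= iterS. Qed.
Lemma wfAdd h K a b : wf h K a -> wf h K b -> wf h K (tAdd a b).
Proof. by rewrite /tAdd /=. Qed.
Opaque tAdd.

Definition mulc := tRec (tV 1) tZ (tAdd (tV 1) (tV 2)).
Definition tMul a b := tApp2 mulc a b.
Lemma semMul a b e : sem (tMul a b) e = sem a e * sem b e.
Proof.
rewrite /tMul /=; elim: (sem b e) => [|n IH] /=; first by rewrite muln0.
by rewrite semAdd /= IH mulnS addnC.
Qed.
Lemma wfMul h K a b : wf h K a -> wf h K b -> wf h K (tMul a b).
Proof. by rewrite /tMul /=; split => //; apply: wfAdd. Qed.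
Opaque tMul.

Definition predc := tRec (tV 0) tZ (tV 0).
Definition subc := tRec (tV 1) (tV 0) (tApp1 predc (tV 1)).
Definition tSub a b := tApp2 subc a b.
Lemma semSub a b e : sem (tSub a b) e = sem a e - sem b e.
Proof.
rewrite /tSub /=; elim: (sem b e) => [|n IH] /=; first by rewrite subn0.
rewrite IH subnS; by case: (_ - _).
Qed.
Lemma wfSub h K a b : wf h K a -> wf h K b -> wf h K (tSub a b).
Proof. by rewrite /tSub /=. Qed.
Opaque tSub.

Definition tNot a := tSub tOne a.
Lemma semNot a e : sem (tNot a) e = 1 - sem a e.
Proof. by rewrite /tNot semSub. Qed.
Lemma wfNot h K a : wf h K a -> wf h K (tNot a).
Proof. by move=> ?; apply: wfSub. Qed.
Opaque tNot.

Definition tEq a b := tNot (tAdd (tSub a b) (tSub b a)).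
Lemma semEq a b e : sem (tEq a b) e = (sem a e == sem b e).
Proof.
rewrite /tEq semNot semAdd !semSub.
case: (sem a e =P sem b e) => [->|E] /=; first by rewrite subnn.
move: E; move: (sem a e) (sem b e) => x y E; lia.
Qed.
Lemma wfEq h K a b : wf h K a -> wf h K b -> wf h K (tEq a b).
Proof. by move=> ??; apply: wfNot; apply: wfAdd; apply: wfSub. Qed.
Opaque tEq.

Definition tLe a b := tNot (tSub a b).
Lemma semLe a b e : sem (tLe a b) e = (sem a e <= sem b e).
Proof. rewrite /tLe semNot semSub; move: (sem a e) (sem b e) => x y; case: (leqP x y) => H; lia. Qed.
Lemma wfLe h K a b : wf h K a -> wf h K b -> wf h K (tLe a b).
Proof. by move=> ??; apply: wfNot; apply: wfSub. Qed.
Opaque tLe.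

Definition tLt a b := tLe (tS a) b.
Lemma semLt a b e : sem (tLt a b) e = (sem a e < sem b e).
Proof. by rewrite /tLt semLe. Qed.
Lemma wfLt h K a b : wf h K a -> wf h K b -> wf h K (tLt a b).
Proof. by move=> ??; apply: wfLe. Qed.
Opaque tLt.

Definition tAnd a b := tMul a b.
Lemma semAnd a b e (P Q : bool) : sem a e = P -> sem b e = Q -> sem (tAnd a b) e = P && Q.
Proof. by rewrite /tAnd semMul => -> ->; case: P; case: Q. Qed.
Lemma wfAnd h K a b : wf h K a -> wf h K b -> wf h K (tAnd a b).
Proof. exact: wfMul. Qed.
Opaque tAnd.

Lemma sum_bool_neq0 (s : seq nat) (P : pred nat) :
  (\sum_(j <- s) (P j : nat) != 0) = has P s.
Proof. elim: s => [|x s IH]; rewrite ?big_nil ?big_cons //= -IH; case: (P x); by rewrite ?add0n ?add1n. Qed.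

Lemma prod_bool (s : seq nat) (P : pred nat) :
  \prod_(j <- s) (P j : nat) = all P s.
Proof. elim: s => [|x s IH]; rewrite ?big_nil ?big_cons //= IH; case: (P x); by rewrite ?mul0n ?mul1n. Qed.

Definition tEx n b := tNot (tNot (tSum n b)).
Lemma semEx n b e (P : pred nat) : (forall j, sem b (j :: e) = P j) ->
  sem (tEx n b) e = has P (iota 0 (sem n e)).
Proof.
move=> HP; rewrite /tEx !semNot /=.
rewrite /index_iota subn0 (eq_bigr (fun j => (P j : nat))) ?HP // -sum_bool_neq0.
by case: (\sum_(_ <- _) _).
Qed.
Lemma wfEx h K a b : wf h K a -> wf h K.+1 b -> wf h K (tEx a b).
Proof. by move=> ??; apply: wfNot; apply: wfNot. Qed.
Opaque tEx.

Definition tAll n b := tProd n b.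
Lemma semAll n b e (P : pred nat) : (forall j, sem b (j :: e) = P j) ->
  sem (tAll n b) e = all P (iota 0 (sem n e)).
Proof.
move=> HP; rewrite /tAll /=.
by rewrite /index_iota subn0 (eq_bigr (fun j => (P j : nat))) ?HP // prod_bool.
Qed.
Lemma wfAll h K a b : wf h K a -> wf h K.+1 b -> wf h K (tAll a b).
Proof. by rewrite /tAll /=. Qed.
Opaque tAll.

Definition ifzc := tRec (tV 0) (tV 1) (tV 4).
Definition tIfz c a b := tApp3 ifzc c a b.
Lemma semIfz c a b e : sem (tIfz c a b) e = if sem c e is 0 then sem a e else sem b e.
Proof. by rewrite /tIfz /=; case: (sem c e). Qed.
Lemma wfIfz h K c a b : wf h K c -> wf h K a -> wf h K b -> wf h K (tIfz c a b).
Proof. by rewrite /tIfz /=. Qed.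
Opaque tIfz.

Ltac wfa := repeat (first [ apply: wfAdd | apply: wfMul | apply: wfSub | apply: wfNot
  | apply: wfEq | apply: wfLe | apply: wfLt | apply: wfAnd | apply: wfEx | apply: wfAll
  | apply: wfIfz | progress (rewrite /=) | split | done ]).

Definition powc := tRec (tV 1) tOne (tMul (tV 1) (tV 2)).
Lemma sem_powc x y : sem powc [:: x; y] = x ^ y.
Proof. rewrite /powc /=; elim: y => [|n IH] /=; first by []. by rewrite semMul /= IH expnS mulnC. Qed.
Lemma wf_powc h : wf h 2 powc.
Proof. rewrite /powc; wfa. Qed.
#[global] Hint Resolve wf_powc : core.
Opaque powc.
Definition tPow a b := tApp2 powc a b.

Definition factc := tRec (tV 0) tOne (tMul (tV 1) (tS (tV 0))).
Lemma sem_factc n : sem factc [:: n] = n`!.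
Proof. rewrite /factc /=; elim: n => [|n IH] //=; by rewrite semMul /= IH factS mulnC. Qed.
Lemma wf_factc h : wf h 1 factc.
Proof. rewrite /factc; wfa. Qed.
#[global] Hint Resolve wf_factc : core.
Opaque factc.

Lemma dvd_exists d q : (d %| q) = has (fun k => k * d == q) (iota 0 q.+1).
Proof.
apply/idP/hasP.
- move=> /dvdnP [k ->]; case: d => [|d].
    by exists 0; rewrite ?muln0.
  exists k => //; rewrite mem_iota /= add0n ltnS.
  by rewrite leq_pmulr.
- by case=> k _ /eqP <-; apply: dvdn_mull.
Qed.

Definition dvdc := tEx (tS (tV 1)) (tEq (tMul (tV 0) (tV 1)) (tV 2)).
Lemma sem_dvdc d q : sem dvdc [:: d; q] = (d %| q).
Proof.
rewrite /dvdc (@semEx _ _ _ (fun k => k * d == q)) ?dvd_exists //.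
by move=> j; rewrite semEq semMul.
Qed.
Lemma wf_dvdc h : wf h 2 dvdc.
Proof. rewrite /dvdc; wfa. Qed.
#[global] Hint Resolve wf_dvdc : core.
Opaque dvdc.
Definition tDvd a b := tApp2 dvdc a b.
Lemma semDvd a b e : sem (tDvd a b) e = (sem a e %| sem b e).
Proof. by rewrite /= sem_dvdc. Qed.
Lemma semPow a b e : sem (tPow a b) e = sem a e ^ sem b e.
Proof. by rewrite /= sem_powc. Qed.

Lemma prime_test q : prime q = (1 < q) && ~~ has (fun d => (1 < d) && (d %| q)) (iota 0 q).
Proof.
apply/idP/andP.
- move=> pq; split; first exact: prime_gt1.
  apply/hasP => -[d]; rewrite mem_iota add0n => /andP [_ dq] /andP [d1 dvd].
  have := primeP pq => -[_ /(_ d dvd) /orP [/eqP E|/eqP E]]; first by rewrite E in d1.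
  by rewrite E ltnn in dq.
- case=> q1 /hasPn H; apply/primeP; split => // d dvd.
  have dq : d <= q by apply: dvdn_leq => //; apply: ltnW.
  rewrite leq_eqVlt in dq; case/orP: dq => [->|dq]; first by rewrite orbT.
  have := H d; rewrite mem_iota add0n dq => /(_ isT); rewrite dvd andbT -leqNgt.
  case: d dvd {H dq} => [|[|d]] //= ; by rewrite dvd0n => /eqP E; rewrite E in q1.
Qed.

Definition primec := tAnd (tLt tOne (tV 0)) (tNot (tEx (tV 0) (tAnd (tLt tOne (tV 0)) (tDvd (tV 0) (tV 1))))).
Lemma sem_primec q : sem primec [:: q] = prime q.
Proof.
rewrite /primec (semAnd (P := 1 < q) (Q := ~~ has (fun d => (1 < d) && (d %| q)) (iota 0 q))).
- by rewrite prime_test.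
- by rewrite semLt.
- rewrite semNot (@semEx _ _ _ (fun d => (1 < d) && (d %| q))) //.
    by case: has.
  by move=> j; rewrite (@semAnd _ _ _ (1 < j) (j %| q)) // ?semLt ?semDvd.
Qed.
Lemma wf_primec h : wf h 1 primec.
Proof. rewrite /primec; wfa. Qed.
#[global] Hint Resolve wf_primec : core.
Opaque primec.

Lemma iterR_ext b (st1 st2 : nat -> nat -> nat) n :
  (forall k z, st1 k z = st2 k z) -> iterR b st1 n = iterR b st2 n.
Proof. by move=> H; elim: n => [|n IH] //=; rewrite IH H. Qed.

Definition Hf a l := head 0 [seq q <- iota a l | prime q].
Lemma Hf_S a l : Hf a l.+1 = if Hf a l is 0 then (if prime (a + l) then a + l else 0) else Hf a l.
Proof.
rewrite /Hf -addn1 iotaD filter_cat /=.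
case E: [seq q <- iota a l | prime q] => [|x s] /=; first by case: prime.
have : x \in [seq q <- iota a l | prime q] by rewrite E mem_head.
rewrite mem_filter => /andP [px _]; by case: x px {E} => [|x].
Qed.

Definition Hc := tRec (tV 1) tZ (tIfz (tV 1) (tIfz (tApp1 primec (tAdd (tV 2) (tV 0))) tZ (tAdd (tV 2) (tV 0))) (tV 1)).
Lemma sem_Hc a l : sem Hc [:: a; l] = Hf a l.
Proof.
rewrite /Hc /= (@iterR_ext _ _ (fun k z => if z is 0 then (if prime (a + k) then a + k else 0) else z)).
  by elim: l => [|l IH] //=; rewrite IH Hf_S.
move=> k z; rewrite !semIfz /=; case: z => [|z] //.
by rewrite semAdd /= sem_primec; case: prime => //=; rewrite semAdd.
Qed.
Lemma wf_Hc h : wf h 2 Hc.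
Proof. rewrite /Hc; wfa; exact: wf_primec. Qed.
#[global] Hint Resolve wf_Hc : core.
Opaque Hc.

Definition npc := tApp2 Hc (tS (tV 0)) (tApp1 factc (tV 0)).
Lemma sem_npc p : sem npc [:: p] = next_prime p.
Proof. by rewrite /npc /= sem_factc sem_Hc. Qed.
Lemma wf_npc h : wf h 1 npc.
Proof. rewrite /npc /=; split; [exact: wf_Hc | by [] | split; [exact: wf_factc | by []]]. Qed.
#[global] Hint Resolve wf_npc : core.
Opaque npc.

Definition nthpc := tRec (tV 0) (tS tOne) (tApp1 npc (tV 1)).
Lemma sem_nthpc i : sem nthpc [:: i] = nth_prime i.
Proof.
rewrite /nthpc /= (@iterR_ext _ _ (fun k z => next_prime z)).
  by elim: i => [|i IH] //=; rewrite IH.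
by move=> k z; rewrite sem_npc.
Qed.
Lemma wf_nthpc h : wf h 1 nthpc.
Proof. rewrite /nthpc /=; do !split => //; exact: wf_npc. Qed.
#[global] Hint Resolve wf_nthpc : core.
Opaque nthpc.
Definition tNthP a := tApp1 nthpc a.
Lemma semNthP a e : sem (tNthP a) e = nth_prime (sem a e).
Proof. by rewrite /= sem_nthpc. Qed.

Definition expo p m := \sum_(0 <= k < m) (p ^ k.+1 %| m : nat).
Definition expoc := tSum (tV 1) (tDvd (tPow (tV 1) (tS (tV 0))) (tV 2)).
Lemma sem_expoc p m : sem expoc [:: p; m] = expo p m.
Proof. by rewrite /expoc /=; apply: eq_bigr => k _; rewrite sem_dvdc sem_powc. Qed.
Lemma wf_expoc h : wf h 2 expoc.
Proof. rewrite /expoc /=; by do !split. Qed.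
#[global] Hint Resolve wf_expoc : core.
Opaque expoc.

Definition elt m i := expo (nth_prime i) m.
Definition eltc := tApp2 expoc (tNthP (tV 1)) (tV 0).
Lemma sem_eltc m i : sem eltc [:: m; i] = elt m i.
Proof. by rewrite /eltc /= sem_nthpc sem_expoc. Qed.
Lemma wf_eltc h : wf h 2 eltc.
Proof. rewrite /eltc /=; by do !split. Qed.
#[global] Hint Resolve wf_eltc : core.
Opaque eltc.
Definition tElt a b := tApp2 eltc a b.
Lemma semElt a b e : sem (tElt a b) e = elt (sem a e) (sem b e).
Proof. by rewrite /= sem_eltc. Qed.

Definition len m := (\sum_(0 <= i < m) (all (fun j => nth_prime j.+1 %| m) (iota 0 i.+1) : nat)).+1.
Definition lenc := tS (tSum (tV 0) (tAll (tS (tV 0)) (tDvd (tNthP (tS (tV 0))) (tV 2)))).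
Lemma sem_lenc m : sem lenc [:: m] = len m.
Proof.
rewrite /lenc /len /=; congr S; apply: eq_bigr => i _.
rewrite (@semAll _ _ _ (fun j => nth_prime j.+1 %| m)) //.
by move=> j /=; rewrite sem_dvdc sem_nthpc.
Qed.
Lemma wf_lenc h : wf h 1 lenc.
Proof. rewrite /lenc /=; split => //; apply: wfAll => //=; by do !split. Qed.
#[global] Hint Resolve wf_lenc : core.
Opaque lenc.

Definition cd M := \prod_(0 <= i < len M) nth_prime i ^ elt M i.
Definition cdc := tProd (tApp1 lenc (tV 0)) (tPow (tNthP (tV 0)) (tElt (tV 1) (tV 0))).
Lemma sem_cdc M : sem cdc [:: M] = cd M.
Proof. by rewrite /cdc /cd /= sem_lenc; apply: eq_bigr => i _; rewrite sem_powc sem_nthpc sem_eltc. Qed.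
Lemma wf_cdc h : wf h 1 cdc.
Proof. rewrite /cdc /=; by do !split. Qed.
#[global] Hint Resolve wf_cdc : core.
Opaque cdc.

Definition sortb M := all (fun i => elt M i < elt M i.+1) (iota 0 (len M - 1)).
Definition sortc := tAll (tSub (tApp1 lenc (tV 0)) tOne) (tLt (tElt (tV 1) (tV 0)) (tElt (tV 1) (tS (tV 0)))).
Lemma sem_sortc M : sem sortc [:: M] = sortb M.
Proof.
rewrite /sortc (@semAll _ _ _ (fun i => elt M i < elt M i.+1)).
  by rewrite semSub /= sem_lenc.
by move=> j; rewrite semLt /= !sem_eltc.
Qed.
Lemma wf_sortc h : wf h 1 sortc.
Proof. rewrite /sortc; apply: wfAll; [apply: wfSub | apply: wfLt] => /=; by do !split. Qed.
#[global] Hint Resolve wf_sortc : core.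
Opaque sortc.

Definition valid M := sortb M && (cd M == M).
Definition validc := tAnd (tApp1 sortc (tV 0)) (tEq (tApp1 cdc (tV 0)) (tV 0)).
Lemma sem_validc M : sem validc [:: M] = valid M.
Proof. by rewrite /validc (@semAnd _ _ _ (sortb M) (cd M == M)) // ?semEq /= ?sem_cdc ?sem_sortc. Qed.
Lemma wf_validc h : wf h 1 validc.
Proof. rewrite /validc; apply: wfAnd => /=; [|apply: wfEq] => /=; by do !split. Qed.
#[global] Hint Resolve wf_validc : core.
Opaque validc.

Definition memb v m := has (fun i => elt m i == v) (iota 0 (len m)).
Definition memc := tEx (tApp1 lenc (tV 1)) (tEq (tElt (tV 2) (tV 0)) (tV 1)).
Lemma sem_memc v m : sem memc [:: v; m] = memb v m.
Proof.
rewrite /memc (@semEx _ _ _ (fun i => elt m i == v)) /= ?sem_lenc //.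
by move=> j; rewrite semEq /= sem_eltc.
Qed.
Lemma wf_memc h : wf h 2 memc.
Proof. rewrite /memc; apply: wfEx; [|apply: wfEq] => /=; by do !split. Qed.
#[global] Hint Resolve wf_memc : core.
Opaque memc.

Definition inU v R B := has (fun i => (len (elt R i) <= B) && memb v (elt R i)) (iota 0 (len R)).
Definition inUc := tEx (tApp1 lenc (tV 1)) (tAnd (tLe (tApp1 lenc (tElt (tV 2) (tV 0))) (tV 3)) (tApp2 memc (tV 1) (tElt (tV 2) (tV 0)))).
Lemma sem_inUc v R B : sem inUc [:: v; R; B] = inU v R B.
Proof.
rewrite /inUc (@semEx _ _ _ (fun i => (len (elt R i) <= B) && memb v (elt R i))) /= ?sem_lenc //.
move=> j; rewrite (@semAnd _ _ _ (len (elt R j) <= B) (memb v (elt R j))) //.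
  by rewrite semLe /= sem_eltc sem_lenc.
by rewrite /= sem_eltc sem_memc.
Qed.
Lemma wf_inUc h : wf h 3 inUc.
Proof. rewrite /inUc; apply: wfEx; [|apply: wfAnd; [apply: wfLe|]] => /=; by do !split. Qed.
#[global] Hint Resolve wf_inUc : core.
Opaque inUc.

Lemma eq_b2n (a b : bool) : (nat_of_bool a == nat_of_bool b) = (a == b).
Proof. by case: a; case: b. Qed.

Definition Qf M R B := valid M && all (fun v => memb v M == inU v R B) (iota 0 (M + R).+1).
Definition Qc := tAnd (tApp1 validc (tV 0)) (tAll (tS (tAdd (tV 0) (tV 1))) (tEq (tApp2 memc (tV 0) (tV 1)) (tApp3 inUc (tV 0) (tV 2) (tV 3)))).
Lemma sem_Qc M R B : sem Qc [:: M; R; B] = Qf M R B.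
Proof.
rewrite /Qc (@semAnd _ _ _ (valid M) (all (fun v => memb v M == inU v R B) (iota 0 (M + R).+1))) //.
  by rewrite /= sem_validc.
rewrite (@semAll _ _ _ (fun v => memb v M == inU v R B)) /= ?semAdd //.
by move=> j; rewrite semEq /= sem_memc sem_inUc eq_b2n.
Qed.
Lemma wf_Qc h : wf h 3 Qc.
Proof. rewrite /Qc; apply: wfAnd; [|apply: wfAll; [|apply: wfEq]] => /=; try apply: wfAdd; by do !split. Qed.
#[global] Hint Resolve wf_Qc : core.
Opaque Qc.

Definition isq x := \sum_(0 <= j < x) (j.+1 * j.+1 <= x : nat).
Definition isqc := tSum (tV 0) (tLe (tMul (tS (tV 0)) (tS (tV 0))) (tV 1)).
Lemma sem_isqc x : sem isqc [:: x] = isq x.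
Proof. by rewrite /isqc /=; apply: eq_bigr => j _; rewrite semLe semMul. Qed.
Lemma wf_isqc h : wf h 1 isqc.
Proof. rewrite /isqc /=; split => //; apply: wfLe => //; apply: wfMul => /=; by do !split. Qed.
#[global] Hint Resolve wf_isqc : core.
Opaque isqc.

Lemma next_prime_spec p : 1 < p -> prime (next_prime p) /\ p < next_prime p.
Proof.
move=> p1.
set q := pdiv p`!.+1.
have f1 : 1 < p`!.+1 by rewrite ltnS fact_gt0.
have pq : prime q := pdiv_prime f1.
have ltpq : p < q.
  rewrite ltnNge; apply/negP => qp.
  have d1 : q %| p`! by apply: dvdn_fact; rewrite prime_gt0.
  have : q %| p`! + 1 by rewrite addn1 /q pdiv_dvd.
  rewrite dvdn_addr // dvdn1 => /eqP q1.
  by rewrite q1 in pq.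
have qin : q \in [seq x <- iota p.+1 p`! | prime x].
  rewrite mem_filter pq mem_iota ltpq /=.
  have := pdiv_leq (ltnW f1); rewrite -/q => ql.
  apply: (leq_ltn_trans ql); rewrite addSn ltnS -addn1 addnC leq_add2r.
  by apply: ltnW.
rewrite /next_prime.
case E: [seq x <- iota p.+1 p`! | prime x] qin => [|x s] //= _.
have : x \in [seq x <- iota p.+1 p`! | prime x] by rewrite E mem_head.
by rewrite mem_filter mem_iota => /andP [px /andP [lx _]].
Qed.

Lemma nth_prime_spec i : prime (nth_prime i) /\ 1 < nth_prime i.
Proof.
elim: i => [|i [pi gi]] //=.
have [H1 H2] := next_prime_spec gi; split => //.
exact: ltn_trans H2.
Qed.

Lemma nth_prime_prime i : prime (nth_prime i).
Proof. by case: (nth_prime_spec i). Qed.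
Lemma nth_prime_gt1 i : 1 < nth_prime i.
Proof. by case: (nth_prime_spec i). Qed.

Lemma nth_prime_lt : {homo nth_prime : i j / i < j}.
Proof.
apply: homo_ltn; first exact: ltn_trans.
by move=> i /=; case: (next_prime_spec (nth_prime_gt1 i)).
Qed.

Lemma nth_prime_eq i j : (nth_prime i == nth_prime j) = (i == j).
Proof.
case: (ltngtP i j) => H.
- by apply/negbTE; rewrite neq_ltn nth_prime_lt.
- by apply/negbTE; rewrite neq_ltn (nth_prime_lt H) orbT.
- by rewrite H !eqxx.
Qed.

Lemma prod_gt0 n (F : nat -> nat) : (forall i, 0 < F i) -> 0 < \prod_(i < n) F i.
Proof.
move=> H; elim: n => [|n IH]; first by rewrite big_ord0.
by rewrite big_ord_recr /= muln_gt0 IH H.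
Qed.

Lemma logn_prod p n (F : nat -> nat) : (forall i, 0 < F i) ->
  logn p (\prod_(i < n) F i) = \sum_(i < n) logn p (F i).
Proof.
move=> H; elim: n => [|n IH]; first by rewrite !big_ord0 logn1.
by rewrite !big_ord_recr /= lognM ?IH ?H ?prod_gt0.
Qed.

Lemma canon_gt0 s : 0 < canon_index s.
Proof. by apply: (@prod_gt0 _ (fun i => nth_prime i ^ nth 0 s i)) => i; rewrite expn_gt0 prime_gt0 ?nth_prime_prime. Qed.

Lemma logn_canon s k : logn (nth_prime k) (canon_index s) = nth 0 s k.
Proof.
rewrite /canon_index (@logn_prod _ _ (fun i => nth_prime i ^ nth 0 s i)) => [|i]; last by rewrite expn_gt0 prime_gt0 ?nth_prime_prime.
rewrite (eq_bigr (fun i : 'I_(size s) => nth 0 s i * (k == i))) => [|i _]; last first.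
  by rewrite lognX logn_prime ?nth_prime_prime // nth_prime_eq.
case: (ltnP k (size s)) => ks.
- rewrite (bigD1 (Ordinal ks)) //= eqxx muln1 big1 ?addn0 // => i.
  rewrite -val_eqE /= eq_sym => /negbTE ->; by rewrite muln0.
- rewrite nth_default // big1 // => i _.
  by rewrite (_ : (k == i) = false) ?muln0 //; apply/negbTE; rewrite neq_ltn (leq_trans (ltn_ord i) ks) orbT.
Qed.

Lemma sum_lt L m : \sum_(0 <= k < m) (k < L : nat) = minn L m.
Proof.
elim: m => [|m IH]; first by rewrite big_geq // minn0.
rewrite big_nat_recr //= IH; case: (ltnP m L) => H /=; lia.
Qed.

Lemma expo_logn p m : prime p -> expo p m = logn p m.
Proof.
move=> pp; case: m => [|m]; first by rewrite /expo big_geq // logn0.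
rewrite /expo (eq_bigr (fun k => (k < logn p m.+1 : nat))) => [|k _]; last by rewrite pfactor_dvdn.
by rewrite sum_lt; apply/minn_idPl; apply: ltnW; apply: ltn_logl.
Qed.

Lemma elt_canon s i : elt (canon_index s) i = nth 0 s i.
Proof. by rewrite /elt expo_logn ?nth_prime_prime // logn_canon. Qed.

Lemma sorted_ge s j : sorted ltn s -> j < size s -> j <= nth 0 s j.
Proof.
move=> /(sortedP 0) H; elim: j => [|j IH] // js.
have := H j js; apply: leq_trans; by rewrite ltnS IH // ltnW.
Qed.

Lemma dvd_canon s j : (nth_prime j %| canon_index s) = (0 < nth 0 s j).
Proof.
by rewrite -{1}(expn1 (nth_prime j)) pfactor_dvdn ?nth_prime_prime ?canon_gt0 // logn_canon.
Qed.

Lemma len_canon s : sorted ltn s -> s != [::] -> len (canon_index s) = size s.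
Proof.
move=> ss sn.
have [n sz] : exists n, size s = n.+1 by case: (s) sn => [|x t] //; exists (size t).
rewrite /len sz; congr S.
rewrite (eq_bigr (fun i => (i < n : nat))) => [|i _].
  rewrite sum_lt; apply/minn_idPl.
  have h1 := sorted_ge ss (_ : n < size s); rewrite sz ltnSn in h1.
  have h2 : nth 0 s n < nth_prime n ^ nth 0 s n := ltn_expl _ (nth_prime_gt1 n).
  apply: ltnW; apply: (leq_ltn_trans (h1 isT)); apply: (leq_trans h2).
  apply: dvdn_leq; first exact: canon_gt0.
  by rewrite pfactor_dvdn ?nth_prime_prime ?canon_gt0 // logn_canon.
congr nat_of_bool; apply/allP/idP => [H|H j].
- have := H i; rewrite mem_iota add0n ltnSn leq0n => /(_ isT).
  rewrite dvd_canon; apply: contraLR; rewrite -leqNgt => iz.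
  by rewrite nth_default // sz.
- rewrite mem_iota add0n leq0n andTb ltnS => ji.
  rewrite dvd_canon; apply: (leq_trans _ (sorted_ge ss _)) => //.
  by rewrite sz ltnS (leq_ltn_trans ji H).
Qed.

Definition dec m := mkseq (elt m) (len m).
Arguments dec : simpl never.
Arguments len : simpl never.

Lemma dec_canon s : sorted ltn s -> s != [::] -> dec (canon_index s) = s.
Proof.
move=> ss sn; rewrite /dec len_canon //.
rewrite (eq_mkseq (g := nth 0 s)) ?mkseq_nth // => i.
exact: elt_canon.
Qed.

Lemma size_dec m : size (dec m) = len m.
Proof. exact: size_mkseq. Qed.
Lemma nth_dec m i : i < len m -> nth 0 (dec m) i = elt m i.
Proof. exact: nth_mkseq. Qed.

Lemma cd_canon M : cd M = canon_index (dec M).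
Proof.
rewrite /cd /canon_index size_dec big_mkord.
by apply: eq_bigr => i _; rewrite nth_dec.
Qed.

Lemma sortb_sorted M : sortb M = sorted ltn (dec M).
Proof.
apply/allP/(sortedP 0) => H i.
- rewrite size_dec => il; rewrite !nth_dec ?(ltnW il) //.
  by apply: H; rewrite mem_iota add0n leq0n /=; move: il; case: (len M) => //= n; rewrite subn1 /= ltnS.
- rewrite mem_iota add0n leq0n andTb => il.
  have il' : i.+1 < len M by move: il; case: (len M) => //= n; rewrite subn1 /= ltnS.
  by have := H i; rewrite size_dec !nth_dec ?(ltnW il') // => /(_ il').
Qed.

Lemma valid_isD M : valid M -> is_D M (dec M).
Proof. by case/andP; rewrite sortb_sorted cd_canon => ss /eqP E; split. Qed.

Lemma valid_canon s : sorted ltn s -> s != [::] -> valid (canon_index s).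
Proof. by move=> ss sn; rewrite /valid sortb_sorted cd_canon dec_canon // ss eqxx. Qed.

Lemma mem_map_has (f : nat -> nat) v s : (v \in map f s) = has (fun i => f i == v) s.
Proof. by elim: s => [|x s IH] //=; rewrite in_cons IH eq_sym. Qed.

Lemma memb_dec v m : memb v m = (v \in dec m).
Proof. by rewrite /memb /dec /mkseq mem_map_has. Qed.

Lemma sum_bool_le (b : nat -> bool) m : \sum_(0 <= k < m) (b k : nat) <= m.
Proof.
elim: m => [|m IH]; first by rewrite big_geq.
rewrite big_nat_recr //= -addn1 leq_add //; by case: (b m).
Qed.

Lemma dec_le v m : v \in dec m -> v <= m.
Proof.
rewrite /dec /mkseq => /mapP [i _ ->].
exact: sum_bool_le.
Qed.

Lemma inU_dec v R B : inU v R B = has (fun m => (len m <= B) && (v \in dec m)) (dec R).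
Proof.
rewrite /inU /dec /mkseq has_map; apply: eq_has => i /=.
by rewrite memb_dec.
Qed.

Definition Ul (l : seq nat) B := flatten [seq dec m | m <- l & len m <= B].

Lemma Ul_cons x l B : Ul (x :: l) B = if len x <= B then dec x ++ Ul l B else Ul l B.
Proof. by rewrite /Ul /=; case: (len x <= B). Qed.

Lemma mem_Ul v l B : (v \in Ul l B) = has (fun m => (len m <= B) && (v \in dec m)) l.
Proof.
elim: l => [|x l IH] //; rewrite Ul_cons.
case: ifP => H; rewrite ?mem_cat IH; by rewrite [RHS]/= H.
Qed.

Lemma size_Ul l B : size (Ul l B) <= size l * B.
Proof.
elim: l => [|x l IH] //; rewrite Ul_cons (_ : size (x :: l) = (size l).+1) // mulSn.
case: ifP => H.
- by rewrite size_cat size_dec leq_add.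
- by apply: (leq_trans IH); rewrite leq_addl.
Qed.
Lemma isq_spec k x : (k <= isq x) = (k * k <= x).
Proof.
apply/idP/idP => H.
- rewrite leqNgt; apply/negP => Hx.
  have k0 : 0 < k by case: k Hx H => //; rewrite muln0.
  have : isq x <= \sum_(0 <= j < x) (j < k.-1 : nat).
    apply: leq_sum => j _.
    case E: (j.+1 * j.+1 <= x) => //.
    have jk : j.+1 < k.
      rewrite ltnNge; apply/negP => kj.
      have := leq_trans (leq_mul kj kj) E; by rewrite leqNgt Hx.
    have -> : j < k.-1 by rewrite -ltnS prednK.
    by [].
  rewrite sum_lt => H2; have := leq_trans H H2; rewrite leq_min => /andP [H3 _].
  move: H3 k0; case: (k) => //= k'; by rewrite ltnn.
- have kx : k <= x.
    case: (k) H => [|k'] H' //; apply: (leq_trans _ H'); by rewrite leq_pmulr.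
  apply: (@leq_trans (\sum_(0 <= j < x) (j < k : nat))); first by rewrite sum_lt leq_min leqnn kx.
  apply: leq_sum => j _; case E: (j < k) => //=.
  rewrite lt0b; apply: leq_trans H; exact: leq_mul.
Qed.

Fixpoint noorc (c : code) : code :=
  match c with
  | cOrc => cZero
  | cComp f gs => cComp (noorc f) (map noorc gs)
  | cRec b s => cRec (noorc b) (noorc s)
  | cMu f => cMu (noorc f)
  | c => c
  end.

Fixpoint noorc_ok (h : nat -> nat) c args y (H : eval (fun _ => 0) c args y) {struct H}
  : eval h (noorc c) args y :=
  match H in eval _ c args y return eval h (noorc c) args y with
  | eZero a => eZero h a
  | eSucc a => eSucc h a
  | eProj i a => eProj h i a
  | eOrc a => eZero h a
  | eComp f gs a ys y' H1 H2 => eComp (noorcs_ok h H1) (noorc_ok h H2)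
  | eRec0 b s r y' H1 => eRec0 (noorc s) (noorc_ok h H1)
  | eRecS b s n r z y' H1 H2 => eRecS (noorc_ok h H1) (noorc_ok h H2)
  | eMu f a y' H1 H2 => eMu (noorc_ok h H1)
      (fun z Hz => match H2 z Hz with ex_intro v Hv => ex_intro _ v (noorc_ok h Hv) end)
  end
with noorcs_ok (h : nat -> nat) gs args ys (H : evals (fun _ => 0) gs args ys) {struct H}
  : evals h (map noorc gs) args ys :=
  match H in evals _ gs args ys return evals h (map noorc gs) args ys with
  | esNil a => esNil h a
  | esCons g gs a y ys H1 H2 => esCons (noorc_ok h H1) (noorcs_ok h H2)
  end.

Lemma sorted_ltn_uniq s : sorted ltn s -> uniq s.
Proof. by rewrite ltn_sorted_uniq_leq => /andP []. Qed.

Section Main.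
Variables (g r r2 g' phi' phi psi : nat -> nat) (n : nat).
Hypothesis Hrtr : exists s, is_D (r n) s /\ size s <= phi' n /\ g' n \in s.
Hypothesis Hr2tr : exists s, is_D (r2 n) s /\ size s <= psi n /\ r n \in s.

Lemma decs_info : exists s s2, dec (r n) = s /\ dec (r2 n) = s2 /\ size s <= phi' n /\
   g' n \in s /\ size s2 <= psi n /\ r n \in s2.
Proof.
have [s [[ss cs] [szs gs]]] := Hrtr.
have [s2 [[ss2 cs2] [szs2 rs2]]] := Hr2tr.
exists s, s2; do !split => //.
- by rewrite -cs dec_canon //; case: (s) gs.
- by rewrite -cs2 dec_canon //; case: (s2) rs2.
Qed.

Lemma gU : g' n \in Ul (dec (r2 n)) (phi' n).
Proof.
have [s [s2 [d1 [d2 [szs [gs [szs2 rs2]]]]]]] := decs_info.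
rewrite mem_Ul; apply/hasP; exists (r n); first by rewrite d2.
by rewrite -size_dec d1 szs gs.
Qed.

Lemma QExists : exists M, Qf M (r2 n) (phi' n).
Proof.
set U := Ul (dec (r2 n)) (phi' n).
set S := sort leq (undup U).
have sS : sorted ltn S.
  by rewrite ltn_sorted_uniq_leq sort_uniq undup_uniq sort_sorted //; exact: leq_total.
have gS : g' n \in S by rewrite mem_sort mem_undup gU.
have SN : S != [::] by case: (S) gS.
exists (canon_index S); rewrite /Qf (valid_canon sS SN) andTb.
apply/allP => v _.
by rewrite memb_dec dec_canon // mem_sort mem_undup mem_Ul inU_dec.
Qed.

Lemma QGood M : Qf M (r2 n) (phi' n) -> (forall n, psi n * phi' n <= phi n) ->
  exists s, is_D M s /\ size s <= phi n /\ g' n \in s.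
Proof.
move=> /andP [vM /allP Hall] Hpp.
have [s [s2 [d1 [d2 [szs [gs [szs2 rs2]]]]]]] := decs_info.
exists (dec M); split; first exact: valid_isD.
have memU v : v <= M -> (v \in dec M) = (v \in Ul (dec (r2 n)) (phi' n)).
  move=> vle; have := Hall v; rewrite mem_iota add0n leq0n ltnS (leq_trans vle (leq_addr _ _)).
  by move=> /(_ isT) /eqP; rewrite memb_dec mem_Ul inU_dec.
split.
- have us : uniq (dec M) by apply: sorted_ltn_uniq; move: vM => /andP []; rewrite sortb_sorted.
  have sub : {subset dec M <= Ul (dec (r2 n)) (phi' n)}.
    by move=> v vin; rewrite -memU // dec_le.
  apply: (leq_trans (uniq_leq_size us sub)).
  apply: (leq_trans (size_Ul _ _)); rewrite d2.
  by apply: leq_trans (Hpp n); rewrite leq_mul2r szs2 orbT.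
- have gle : g' n <= r2 n.
    apply: (@leq_trans (r n)); [apply: dec_le; by rewrite d1 | apply: dec_le; by rewrite d2].
  have := Hall (g' n); rewrite mem_iota add0n leq0n ltnS (leq_trans gle (leq_addl _ _)).
  by move=> /(_ isT) /eqP; rewrite memb_dec => ->; rewrite inU_dec -mem_Ul gU.
Qed.

End Main.

Theorem mainTheorem4 (f g : nat -> nat) :
  traceable f -> traceable_rel f g -> traceable g.
Proof.
move=> [h0 [Hh0 Hf]] Hg.
exists h0; split => //.
move=> phi [cphi Hcphi] phi1 phimono phiunb g' Hg'.
pose phi' := fun n => isq (phi n).
have Hphi'c : computable phi'.
  exists (compile 1 (tApp1 isqc (tExt cphi phi (tV 0)))) => n.
  have := @compile_ok (fun _ => 0) (tApp1 isqc (tExt cphi phi (tV 0))) 1 [:: n].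
  rewrite /= sem_isqc; apply => //; do !split => //.
have p1 : forall n, 1 <= phi' n by move=> n; rewrite /phi' isq_spec.
have pm : forall m n, m <= n -> phi' m <= phi' n.
  move=> m n mn; rewrite /phi' isq_spec; apply: (leq_trans _ (phimono _ _ mn)).
  by rewrite -isq_spec.
have pu : forall b, exists n, b < phi' n.
  move=> b; have [n Hn] := phiunb (b.+1 * b.+1); exists n.
  by rewrite /phi' isq_spec ltnW.
have [r [Hr Hrtr]] := Hg phi' Hphi'c p1 pm pu g' Hg'.
have [r2 [[c2 Hc2] Hr2tr]] := Hf phi' Hphi'c p1 pm pu r Hr.
have HQ : forall n, exists M, Qf M (r2 n) (phi' n).
  by move=> n; apply: (QExists (Hrtr n) (Hr2tr n)).
pose r3 n := ex_minn (HQ n).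
have Hpp : forall n, phi' n * phi' n <= phi n by move=> n; rewrite -isq_spec.
exists r3; split.
- pose Pt := tNot (tApp3 Qc (tV 0) (tExt c2 r2 (tV 1)) (tApp1 isqc (tExt (noorc cphi) phi (tV 1)))).
  have semP : forall y n, sem Pt [:: y; n] = 1 - Qf y (r2 n) (phi' n).
    by move=> y n; rewrite /Pt semNot /= sem_isqc sem_Qc.
  have wfP : wf h0 2 Pt.
    apply: wfNot => /=; do !split => //.
    by move=> x; apply: noorc_ok.
  have evP : forall y n, eval h0 (compile 2 Pt) [:: y; n] (1 - Qf y (r2 n) (phi' n)).
    by move=> y n; rewrite -semP; apply: compile_ok.
  exists (cMu (compile 2 Pt)) => n; rewrite /r3; case: ex_minnP => M HM Hmin.
  apply: eMu; first by have := evP M n; rewrite HM.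
  move=> z zM; exists 0; have := evP z n.
  case E: (Qf z (r2 n) (phi' n)) => //.
  by have := Hmin z E; rewrite leqNgt zM.
- move=> n; rewrite /r3; case: ex_minnP => M HM _.
  exact: (QGood (Hrtr n) (Hr2tr n) HM Hpp).
Qed.
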